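(* Let $G$ be a finite group and let $H_1, \ldots, H_{\ell}$ be proper subgroups of $G$. Suppose that $x_1, \ldots, x_m \in G$ represent distinct $G$-conjugacy classes, and that there are numbers $A_1,\dots,A_\ell$ and $B>0$ with $\sum_{i=1}^m|x_i^G \cap H_j| \leqslant A_j$ for all $j$ and $|x_i^G| \geqslant B$ for all $i$. Then for every positive integer $c$, \[ \sum_{i=1}^{m}|x_i^G|\left(\sum_{j=1}^{\ell}{\rm fpr}(x_i,G/H_j)\right)^c \leqslant B^{1-c}\left(\sum_{j=1}^{\ell}A_j\right)^c. \]
   Context: For $x\in G$ and $H<G$, ${\rm fpr}(x,G/H)=|x^G\cap H|/|x^G|$. *)

(* Defs.v *)
From mathcomp Require Import all_boot all_order all_algebra all_fingroup.
Set Implicit Arguments. Unset Strict Implicit. Unset Printing Implicit Defensive.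
Import GRing.Theory Num.Theory.
Local Open Scope ring_scope.

Definition fpr (R : fieldType) (gT : finGroupType) (G H : {set gT}) (x : gT) : R :=
  (#|((x ^: G) :&: H)%g|%:R) / (#|(x ^: G)%g|%:R).

(* Main.v *)
Require Import Defs.
From mathcomp Require Import all_boot all_order all_algebra all_fingroup.
Import Order.TTheory GRing.Theory Num.Theory.
Local Open Scope ring_scope.

Lemma superadd (R : realFieldType) (a b : R) (k : nat) :
  0 <= a -> 0 <= b -> a ^+ k.+1 + b ^+ k.+1 <= (a + b) ^+ k.+1.
Proof.
move=> ha hb; rewrite !exprS mulrDl.
have hab : 0 <= a + b by rewrite addr_ge0.
apply: lerD; apply: ler_wpM2l => //; apply: lerXn2r => //; rewrite ?nnegrE //.
  by rewrite lerDl.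
by rewrite lerDr.
Qed.

Lemma sum_superadd (R : realFieldType) (I : Type) (r : seq I) (F : I -> R) k :
  (forall i, 0 <= F i) ->
  \sum_(i <- r) F i ^+ k.+1 <= (\sum_(i <- r) F i) ^+ k.+1.
Proof.
move=> hF; elim: r => [|a r IH]; first by rewrite !big_nil expr0n.
rewrite !big_cons.
have h0 : 0 <= \sum_(i <- r) F i by apply: sumr_ge0.
apply: le_trans _ (@superadd _ _ _ k (hF a) h0).
by rewrite lerD2l.
Qed.

Theorem lemma2p7 (R : realFieldType) (gT : finGroupType) (G : {group gT})
  (l m : nat) (H : 'I_l -> {group gT}) (x : 'I_m -> gT)
  (A : 'I_l -> R) (B : R) :
  (forall j, H j \proper G) ->
  (forall i, x i \in G) ->
  injective (fun i => (x i ^: G)%g) ->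
  (forall j, \sum_(i < m) (#|((x i ^: G) :&: H j)%g|%:R : R) <= A j) ->
  0 < B ->
  (forall i, B <= #|(x i ^: G)%g|%:R) ->
  forall c : nat, (0 < c)%N ->
  \sum_(i < m) (#|(x i ^: G)%g|%:R * (\sum_(j < l) fpr R G (H j) (x i)) ^+ c)
    <= B ^- (c - 1) * (\sum_(j < l) A j) ^+ c.
Proof.
move=> _ _ _ hA hB hn [//|k] _.
rewrite subSS subn0.
set s := fun i : 'I_m => \sum_(j < l) (#|((x i ^: G) :&: H j)%g|%:R : R).
have s0 : forall i, 0 <= s i by move=> i; apply: sumr_ge0.
apply: (@le_trans _ _ (\sum_(i < m) s i * (s i / B) ^+ k)).
  apply: ler_sum => i _.
  have n0 : 0 < (#|(x i ^: G)%g|%:R : R) by apply: lt_le_trans (hn i).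
  have -> : \sum_(j < l) fpr R G (H j) (x i) = s i / #|(x i ^: G)%g|%:R.
    by rewrite /s mulr_suml.
  rewrite exprS mulrA mulrCA divff ?mulr1; last by rewrite gt_eqF.
  apply: ler_wpM2l => //; apply: lerXn2r.
  - by rewrite nnegrE divr_ge0 // ltW.
  - by rewrite nnegrE divr_ge0 // ltW.
  apply: ler_wpM2l => //; rewrite lef_pV2 ?posrE //.
under eq_bigr do rewrite exprMn mulrA -exprS exprVn mulrC.
rewrite -mulr_sumr; apply: ler_wpM2l; first by rewrite invr_ge0 exprn_ge0 ?ltW.
apply: le_trans (@sum_superadd _ _ _ _ k s0) _.
have hsum : \sum_(i < m) s i <= \sum_(j < l) A j.
  rewrite /s exchange_big; apply: ler_sum => j _; exact: hA.
have h1 : 0 <= \sum_(i < m) s i by apply: sumr_ge0.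
apply: lerXn2r => //; rewrite nnegrE //.
exact: le_trans h1 hsum.
Qed.
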